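(* If $\mu_0<\mu<1$ and $v\in\mathcal{K}\setminus\mathcal{Y}_\mu$, then $C_v^+\cap\mathcal{K}\subset\mathcal{K}\setminus\mathcal{Y}_\mu$.
   Context: $\mathcal{K}\subset\mathbb{R}^q$ is an open, bounded, convex set with $0\in\mathcal{K}$. Let $g:\mathbb{S}^{q-1}\to(0,\infty)$ be the Lipschitz function such that $\nu\mapsto g(\nu)\nu$ parametrizes $\partial\mathcal{K}$, and $m_2=\sup g$. Define $G:\overline{B_1(0)}\to\overline{\mathcal{K}}$ by $G(x)=g(x/|x|)x$ for $x\ne0$, $G(0)=0$, and for $0<\mu<1$ let $\mathcal{Y}_\mu=G(B_\mu(0))$ (open convex sets increasing to $\mathcal{K}$). Fix $r_0>0$ and $0<\mu_0<1$ with $\overline{B_{r_0}(0)}\subset\mathcal{Y}_{\mu_0}$. Cones: for $v\in\mathcal{K}\setminus\overline{B_{r_0}(0)}$, $C_v^-$ is the closed (solid) half-cone with vertex $v$, axis the ray from $v$ through $0$, and half-aperture $\alpha=\alpha(v)\in(0,\pi/2)$ given by $\sin\alpha=r_0/|v|$; $C_v^+=\{v+\xi:\xi\in\mathbb{R}^q,\ v-\xi\in C_v^-\}$ is its reflection through $v$. (Note that $v\in\mathcal{K}\setminus\mathcal{Y}_\mu$ with $\mu>\mu_0$ implies $v\notin\overline{B_{r_0}(0)}$, so $C_v^+$ is defined.) *)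

(* Defs.v *)
From mathcomp Require Import all_boot all_order all_algebra.
From mathcomp Require Import all_classical all_reals all_analysis.
Set Implicit Arguments. Unset Strict Implicit. Unset Printing Implicit Defensive.
Import Order.TTheory GRing.Theory Num.Theory.
Local Open Scope ring_scope.
Local Open Scope classical_set_scope.

Section Defs.
Context {R : realType} {q : nat}.
Notation V := 'rV[R]_q.

Definition dot (u w : V) : R := \sum_(i < q) u 0 i * w 0 i.
Definition enorm (u : V) : R := Num.sqrt (dot u u).

Definition eopen (K : set V) : Prop :=
  forall x, K x -> exists2 e : R, 0 < e & forall y, enorm (y - x) < e -> K y.
Definition ebounded (K : set V) : Prop :=
  exists M : R, forall x, K x -> enorm x <= M.
Definition econvex (K : set V) : Prop :=
  forall x y (t : R), K x -> K y -> 0 <= t -> t <= 1 -> K (t *: x + (1 - t) *: y).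
Definition eclosure (K : set V) : set V :=
  [set x | forall e : R, 0 < e -> exists2 y, K y & enorm (y - x) < e].
Definition einterior (K : set V) : set V :=
  [set x | exists2 e : R, 0 < e & forall y, enorm (y - x) < e -> K y].
Definition eboundary (K : set V) : set V := eclosure K `\` einterior K.

Definition sphere : set V := [set x | enorm x = 1].
Definition oball0 (r : R) : set V := [set x | enorm x < r].
Definition cball0 (r : R) : set V := [set x | enorm x <= r].

Definition Gmap (g : V -> R) (x : V) : V :=
  if x == 0 then 0 else g ((enorm x)^-1 *: x) *: x.
Definition Ymu (g : V -> R) (mu : R) : set V := Gmap g @` oball0 mu.

Definition alpha (r0 : R) (v : V) : R := asin (r0 / enorm v).

(* C_v^- : closed solid half-cone, vertex v, axis the ray from v through 0,
   half-aperture alpha(v): w = v or the angle between w - v and -v is <= alpha *)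
Definition cone_minus (r0 : R) (v : V) : set V :=
  [set w | enorm (w - v) * enorm v * cos (alpha r0 v) <= dot (w - v) (- v)].

Definition cone_plus (r0 : R) (v : V) : set V :=
  [set w | exists xi : V, w = v + xi /\ cone_minus r0 v (v - xi)].
End Defs.

(* Main.v *)
Require Import Defs.
From mathcomp Require Import all_boot all_order all_algebra.
From mathcomp Require Import all_classical all_reals all_analysis.
From mathcomp Require Import ring lra.
Import Order.TTheory GRing.Theory Num.Theory.
Local Open Scope ring_scope.
Local Open Scope classical_set_scope.

Section Aux.
Context {R : realType} {q : nat}.
Notation V := 'rV[R]_q.
Implicit Types u w z : V.

Lemma dotC u w : dot u w = dot w u.
Proof. by apply: eq_bigr => i _; rewrite mulrC. Qed.
Lemma dotDl u w z : dot (u + w) z = dot u z + dot w z.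
Proof. by rewrite /dot -big_split; apply: eq_bigr => i _; rewrite mxE mulrDl. Qed.
Lemma dotZl a u w : dot (a *: u) w = a * dot u w.
Proof. by rewrite /dot mulr_sumr; apply: eq_bigr => i _; rewrite mxE mulrA. Qed.
Lemma dotNl u w : dot (- u) w = - dot u w.
Proof. by rewrite -scaleN1r dotZl mulN1r. Qed.
Lemma dotBl u w z : dot (u - w) z = dot u z - dot w z.
Proof. by rewrite dotDl dotNl. Qed.
Lemma dotDr u w z : dot z (u + w) = dot z u + dot z w.
Proof. by rewrite dotC dotDl !(dotC z). Qed.
Lemma dotZr a u w : dot w (a *: u) = a * dot w u.
Proof. by rewrite dotC dotZl dotC. Qed.
Lemma dotNr u w : dot w (- u) = - dot w u.
Proof. by rewrite dotC dotNl dotC. Qed.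
Lemma dotBr u w z : dot z (u - w) = dot z u - dot z w.
Proof. by rewrite dotDr dotNr. Qed.
Lemma dot_ge0 u : 0 <= dot u u.
Proof. by apply: sumr_ge0 => i _; rewrite -expr2 sqr_ge0. Qed.
Lemma dot0l u : dot 0 u = 0.
Proof. by rewrite -(scale0r 0) dotZl mul0r. Qed.
Lemma dot_eq0 u : dot u u = 0 -> u = 0.
Proof.
move=> /eqP; rewrite psumr_eq0; last by move=> i _; rewrite -expr2 sqr_ge0.
move=> /allP H; apply/rowP => i; rewrite mxE.
have := H i (mem_index_enum _); rewrite /= -expr2 sqrf_eq0 => /eqP //.
Qed.
Lemma enorm_ge0 u : 0 <= enorm u.
Proof. exact: sqrtr_ge0. Qed.
Lemma enorm_sqr u : enorm u ^+ 2 = dot u u.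
Proof. by rewrite sqr_sqrtr // dot_ge0. Qed.
Lemma enorm_eq0 u : enorm u = 0 -> u = 0.
Proof. by move=> h; apply: dot_eq0; rewrite -enorm_sqr h expr0n. Qed.
Lemma enorm0 : enorm (0 : V) = 0.
Proof. by rewrite /enorm dot0l sqrtr0. Qed.
Lemma enormZ a u : enorm (a *: u) = `|a| * enorm u.
Proof. by rewrite /enorm dotZl dotZr mulrA -expr2 sqrtrM ?sqr_ge0 // sqrtr_sqr. Qed.
Lemma enormN u : enorm (- u) = enorm u.
Proof. by rewrite -scaleN1r enormZ normrN normr1 mul1r. Qed.
Lemma enormB u w : enorm (u - w) = enorm (w - u).
Proof. by rewrite -enormN opprB. Qed.
Lemma seg (K : set V) a b t : eopen K -> econvex K -> K b -> eclosure K a ->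
  0 <= t -> t < 1 -> K (t *: a + (1 - t) *: b).
Proof.
move=> Ko Kc Kb Ka t0 t1.
have [->|tn0] := eqVneq t 0; first by rewrite scale0r add0r subr0 scale1r.
have tp : 0 < t by rewrite lt_neqAle eq_sym tn0.
have t1p : 0 < 1 - t by rewrite subr_gt0.
have [e ep He] := Ko b Kb.
have dp : 0 < e * (1 - t) / t by rewrite !divr_gt0 ?mulr_gt0.
have [y Ky Hy] := Ka _ dp.
set c := t / (1 - t).
have cp : 0 < c by rewrite divr_gt0.
have Kb' : K (b + c *: (a - y)).
  apply: He; rewrite (addrC b) addrK enormZ gtr0_norm // enormB.
  rewrite /c -ltr_pdivlMl ?divr_gt0 // invf_div mulrC.
  by rewrite mulrA.
have := Kc y _ t Ky Kb' t0 (ltW t1).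
congr K; rewrite scalerDr scalerA /c mulrC divfK; last by rewrite gt_eqF.
rewrite scalerBr; move: (t *: a) (t *: y) ((1 - t) *: b) => A B C.
by rewrite addrCA [B + _]addrC subrK addrC.
Qed.
Lemma enorm_gt0 u : u != 0 -> 0 < enorm u.
Proof.
move=> un0; rewrite lt_neqAle enorm_ge0 andbT; apply/eqP => h.
by move: un0; rewrite (enorm_eq0 _ (esym h)) eqxx.
Qed.

Lemma interior_sub (K : set V) x : einterior K x -> K x.
Proof. by case=> e ep H; apply: H; rewrite subrr enorm0. Qed.

Lemma Ymu_mono (g : V -> R) m1 m2 : m1 <= m2 -> Ymu g m1 `<=` Ymu g m2.
Proof. by move=> le x [y yb <-]; exists y => //; rewrite /oball0 /=; apply: lt_le_trans le. Qed.

Lemma K_of_Y (K : set V) (g : V -> R) m w :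
  eopen K -> econvex K -> K 0 ->
  (forall x, eboundary K x <-> exists2 nu, sphere nu & x = g nu *: nu) ->
  0 < m -> Ymu g m w -> K (m^-1 *: w).
Proof.
move=> Ko Kc K0 Hb mp [x xm <-]; rewrite /Gmap.
case: eqP => [_|/eqP xn0]; first by rewrite scaler0.
have nx := enorm_gt0 _ xn0.
set nu := (enorm x)^-1 *: x.
have snu : sphere nu by rewrite /sphere /= /nu enormZ ger0_norm ?invr_ge0 ?enorm_ge0 // mulVf // gt_eqF.
have xE : x = enorm x *: nu by rewrite /nu scalerA mulfV ?scale1r // gt_eqF.
have bd : eclosure K (g nu *: nu) by have [] := (Hb (g nu *: nu)).2 (ex_intro2 _ _ nu snu erefl).
have xm' : enorm x / m < 1 by rewrite ltr_pdivrMr // mul1r.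
have := seg _ _ _ _ Ko Kc K0 bd (divr_ge0 (enorm_ge0 x) (ltW mp)) xm'.
congr K; rewrite scaler0 addr0 [in RHS]xE !scalerA; congr (_ *: _).
by field; rewrite ?gt_eqF.
Qed.

Lemma Y_of_K (K : set V) (g : V -> R) m k :
  ebounded K -> eopen K ->
  (forall nu, sphere nu -> 0 < g nu) ->
  (forall x, eboundary K x <-> exists2 nu, sphere nu & x = g nu *: nu) ->
  0 < m -> K k -> k != 0 -> Ymu g m (m *: k).
Proof.
move=> [M HM] Ko gpos Hb mp Kk kn0.
have nk := enorm_gt0 _ kn0.
set nu := (enorm k)^-1 *: k.
have snu : enorm nu = 1 by rewrite /nu enormZ ger0_norm ?invr_ge0 ?enorm_ge0 // mulVf // gt_eqF.
have kE : k = enorm k *: nu by rewrite /nu scalerA mulfV ?scale1r // gt_eqF.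
clearbody nu.
set S := [set s : R | 0 <= s /\ K (s *: nu)].
have ubS : ubound S M.
  move=> s [s0 Ks]; have := HM _ Ks; by rewrite enormZ snu mulr1 ger0_norm.
have SK : S (enorm k) by split; [exact: enorm_ge0| rewrite -kE].
have hS : has_sup S by split; [exists (enorm k) | exists M].
set rho := sup S.
have krho : enorm k <= rho by apply: sup_upper_bound.
have rhop : 0 < rho by apply: lt_le_trans krho.
have nK : ~ K (rho *: nu).
  move=> Kr; have [e ep He] := Ko _ Kr.
  have : S (rho + e / 2).
    split; first by rewrite addr_ge0 ?ltW ?divr_gt0.
    apply: He; rewrite -scalerBl addrAC subrr add0r enormZ snu mulr1 gtr0_norm ?divr_gt0 //.
    by rewrite ltr_pdivrMr // ltr_pMr // ltr1n.
  move/(sup_upper_bound hS); rewrite -/rho => h.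
  have : e / 2 <= 0 by rewrite -(lerD2l rho) addr0.
  by rewrite leNgt divr_gt0.
have cl : eclosure K (rho *: nu).
  move=> e ep; have [s [s0 Ks] hs] := sup_adherent ep hS.
  exists (s *: nu) => //; rewrite -scalerBl enormZ snu mulr1.
  have sr : s <= rho by apply: sup_upper_bound.
  by rewrite ler0_norm ?subr_le0 // opprB ltrBlDr -ltrBlDl.
have [nu' snu' E] := (Hb (rho *: nu)).1 (conj cl (fun h => nK (interior_sub _ _ h))).
have gp := gpos _ snu'.
have rg : rho = g nu'.
  have := congr1 enorm E; rewrite !enormZ snu snu' !mulr1 gtr0_norm // gtr0_norm //.
have nuE : nu' = nu.
  have : rho^-1 *: (rho *: nu) = rho^-1 *: (rho *: nu') by rewrite E -rg.
  by rewrite !scalerA mulVf ?gt_eqF // !scale1r => ->.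
have klt : enorm k < rho.
  rewrite lt_neqAle krho andbT; apply/eqP => h; apply: nK; by rewrite -h -kE.
exists ((m * enorm k / rho) *: nu).
  rewrite /oball0 /= enormZ snu mulr1 gtr0_norm ?divr_gt0 ?mulr_gt0 //.
  by rewrite ltr_pdivrMr // ltr_pM2l.
have cp : 0 < m * enorm k / rho by rewrite ?divr_gt0 ?mulr_gt0.
have xn0 : (m * enorm k / rho) *: nu != 0.
  apply/eqP => h; have := congr1 enorm h.
  by rewrite enormZ snu enorm0 mulr1 gtr0_norm // => /eqP; rewrite gt_eqF.
rewrite /Gmap (negbTE xn0) enormZ snu mulr1 gtr0_norm // [X in g X]scalerA mulVf ?gt_eqF // scale1r.
have -> : g nu = rho by rewrite -nuE.
rewrite scalerA [in RHS]kE scalerA; congr (_ *: _).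
by field; rewrite gt_eqF.
Qed.
End Aux.

Theorem proposition2p3 (R : realType) (q : nat) (K : set 'rV[R]_q)
  (g : 'rV[R]_q -> R) (r0 mu0 mu : R) (v : 'rV[R]_q) :
  eopen K -> ebounded K -> econvex K -> K 0 ->
  (forall nu, sphere nu -> 0 < g nu) ->
  (exists L : R, forall nu nu', sphere nu -> sphere nu' ->
       `|g nu - g nu'| <= L * enorm (nu - nu')) ->
  (forall x, eboundary K x <-> exists2 nu, sphere nu & x = g nu *: nu) ->
  0 < r0 -> 0 < mu0 -> mu0 < 1 ->
  cball0 r0 `<=` Ymu g mu0 ->
  mu0 < mu -> mu < 1 ->
  K v -> ~ Ymu g mu v ->
  cone_plus r0 v `&` K `<=` K `\` Ymu g mu.
Proof.
move=> Ko Kbd Kc K0 gpos _ Hb r0p mu0p mu01 Hball mu0mu mu1 Kv nYv w [[xi [wE Hc]] Kw].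
split => // Yw.
have mup : 0 < mu by apply: lt_trans mu0mu.
have nvr : r0 < enorm v.
  rewrite ltNge; apply/negP => h; apply: nYv.
  by apply: (Ymu_mono _ _ _ (ltW mu0mu)); apply: Hball.
have nvp : 0 < enorm v by apply: lt_trans nvr.
have vn0 : v != 0.
  by apply/eqP => v0; move: nvp; rewrite v0 enorm0 ltxx.
have [xi0|xin0] := eqVneq xi 0; first by rewrite wE xi0 addr0 in Yw.
have Hc' : enorm xi * enorm v * cos (alpha r0 v) <= dot v xi.
  by move: Hc; rewrite /cone_minus /= addrAC subrr add0r enormN dotNl dotNr opprK dotC.
set nv := enorm v in nvr nvp Hc'.
set c := cos (alpha r0 v) in Hc'.
have rv0 : 0 <= r0 / nv by rewrite divr_ge0 ?ltW.
have rv1 : r0 / nv <= 1 by rewrite ler_pdivrMr // mul1r ltW.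
have cE : c = Num.sqrt (1 - (r0 / nv) ^+ 2).
  rewrite /c /alpha cos_asin //; apply/andP; split => //.
  by apply: le_trans rv0; rewrite lerN10.
have c0 : 0 <= c by rewrite cE sqrtr_ge0.
have c2 : c ^+ 2 = 1 - (r0 / nv) ^+ 2.
  by rewrite cE sqr_sqrtr // subr_ge0 exprn_ile1.
have dpos : 0 < dot xi xi.
  rewrite lt_neqAle dot_ge0 andbT; apply/eqP => h.
  by move: xin0; rewrite (dot_eq0 _ (esym h)) eqxx.
set d := dot xi xi in dpos.
set p := dot v xi in Hc'.
have exi := enorm_ge0 xi.
have p0 : 0 <= p by apply: le_trans Hc'; rewrite !mulr_ge0 // ltW.
have ple : (enorm xi * nv * c) ^+ 2 <= p ^+ 2.
  have h0 : 0 <= enorm xi * nv * c by rewrite !mulr_ge0 // ltW.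
  nra.
rewrite !exprMn enorm_sqr -/d c2 in ple.
set t := p / d.
have t0 : 0 <= t by rewrite divr_ge0 // ltW.
set b := v - t *: xi.
have bb : dot b b = nv ^+ 2 - p ^+ 2 / d.
  rewrite /b dotBl !dotBr !dotZl !dotZr (dotC xi v) -/p -/d /nv enorm_sqr /t.
  by field; rewrite gt_eqF.
have bnorm : enorm b <= r0.
  rewrite /enorm bb -(ger0_norm (ltW r0p)) -sqrtr_sqr ler_sqrt ?sqr_ge0 //.
  have e1 : nv ^+ 2 * (1 - (r0 / nv) ^+ 2) = nv ^+ 2 - r0 ^+ 2.
    by field; rewrite gt_eqF.
  have e2 : nv ^+ 2 * (1 - (r0 / nv) ^+ 2) <= p ^+ 2 / d.
    by rewrite ler_pdivlMr // mulrC mulrA.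
  lra.
have Yb : Ymu g mu0 b by apply: Hball.
have Kb' := K_of_Y _ _ _ _ Ko Kc K0 Hb mu0p Yb.
have Kw' := K_of_Y _ _ _ _ Ko Kc K0 Hb mup Yw.
have mm0 : 0 <= mu0 / mu by rewrite divr_ge0 ?ltW.
have mm1 : mu0 / mu <= 1 by rewrite ler_pdivrMr // mul1r ltW.
have Kb'' := Kc _ _ _ Kb' K0 mm0 mm1.
have l0 : 0 <= t / (1 + t) by rewrite divr_ge0 // addr_ge0.
have l1 : t / (1 + t) <= 1 by rewrite ler_pdivrMr ?ltr_wpDr // mul1r lerDr.
have := Kc _ _ _ Kw' Kb'' l0 l1.
have kn0 : mu^-1 *: v != 0 by rewrite scaler_eq0 negb_or invr_eq0 gt_eqF.
move=> Kk; have := Y_of_K _ _ _ _ Kbd Ko gpos Hb mup _ kn0.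
rewrite scalerA mulfV ?gt_eqF // scale1r => H; apply: nYv; apply: H.
move: Kk; congr K.
rewrite scaler0 addr0 wE /b !scalerA scalerDr scalerBr scalerA.
have comb : forall A B : R, A = mu^-1 -> B = 0 ->
    mu^-1 *: v = A *: v + B *: xi.
  by move=> A B -> ->; rewrite scale0r addr0.
rewrite (comb (t / (1 + t) / mu + (1 - t / (1 + t)) * (mu0 / mu) / mu0)
   (t / (1 + t) / mu - (1 - t / (1 + t)) * (mu0 / mu) / mu0 * t)).
  rewrite scalerDl scalerBl.
  move: (_ *: v) (_ *: xi) (_ *: v) (_ *: xi) => a b' c' d'.
  by rewrite addrACA.
- have t1p : 0 < 1 + t by lra.
  by field; rewrite !lt0r_neq0.
- have t1p : 0 < 1 + t by lra.
  by field; rewrite !lt0r_neq0.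
Qed.
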